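(* Let $C=\mathbb{S}^1\times\mathbb{R}$ be the flat Euclidean cylinder with distance $d$, $\theta_0\in\mathbb{S}^1$, $v=\{\theta_0\}\times\mathbb{R}$, and let $f:C\to C$ be a geodesic-preserving bijection with $f(v)=v$, $f(\theta_0,0)=(\theta_0,0)$ and $f(\theta_0,1)=(\theta_0,1)$. If $x,y\in C$ lie on the same vertical geodesic and $d(x,y)=1$, then $d(f(x),f(y))=1$.
   Context: $C$ carries the product of the flat metric on $\mathbb{S}^1=\mathbb{R}/\mathbb{Z}$ (circumference $1$) and the standard metric on $\mathbb{R}$. A geodesic is the image of a locally isometric immersion of the whole real line; a bijection (not assumed continuous) is geodesic-preserving if it maps every geodesic onto a geodesic as a set. Vertical geodesics are the lines $\{\theta\}\times\mathbb{R}$. *)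

(* Defs.v *)
From Stdlib Require Import Reals.
Open Scope R_scope.

(* S^1 = R/Z, represented by the canonical representatives in [0,1). *)
Definition S1 : Type := {t : R | 0 <= t < 1}.

Definition dS1 (a b : S1) : R :=
  Rmin (Rabs (proj1_sig a - proj1_sig b)) (1 - Rabs (proj1_sig a - proj1_sig b)).

Definition Cyl : Type := (S1 * R)%type.

Definition dC (p q : Cyl) : R :=
  sqrt (dS1 (fst p) (fst q) ^ 2 + (snd p - snd q) ^ 2).

Definition loc_isom (g : R -> Cyl) : Prop :=
  forall s : R, exists eps : R, 0 < eps /\
    forall t u : R, Rabs (t - s) < eps -> Rabs (u - s) < eps ->
      dC (g t) (g u) = Rabs (t - u).

Definition is_geodesic (G : Cyl -> Prop) : Prop :=
  exists g : R -> Cyl, loc_isom g /\ forall p, G p <-> exists s, g s = p.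

Definition img (f : Cyl -> Cyl) (G : Cyl -> Prop) : Cyl -> Prop :=
  fun p => exists q, G q /\ f q = p.

Definition bijective_map (f : Cyl -> Cyl) : Prop :=
  (forall p q, f p = f q -> p = q) /\ (forall p, exists q, f q = p).

Definition geodesic_preserving (f : Cyl -> Cyl) : Prop :=
  forall G, is_geodesic G -> is_geodesic (img f G).

Definition vertical (th : S1) : Cyl -> Prop := fun p => fst p = th.

(* Main.v *)
Require Import Defs.
From Stdlib Require Import Reals Lra Lia Psatz ZArith IndefiniteDescription ProofIrrelevance Classical.
Open Scope R_scope.

Definition cong (x y : R) : Prop := exists k : Z, x - y = IZR k.

Lemma cong_refl x : cong x x.
Proof. exists 0%Z. simpl; ring. Qed.
Lemma cong_sym x y : cong x y -> cong y x.
Proof. intros [k Hk]; exists (-k)%Z; rewrite opp_IZR; lra. Qed.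
Lemma cong_trans x y z : cong x y -> cong y z -> cong x z.
Proof. intros [k Hk] [l Hl]; exists (k+l)%Z; rewrite plus_IZR; lra. Qed.
Lemma cong_add x y a b : cong x y -> cong a b -> cong (x + a) (y + b).
Proof. intros [k Hk] [l Hl]; exists (k+l)%Z; rewrite plus_IZR; lra. Qed.
Lemma cong_opp x y : cong x y -> cong (- x) (- y).
Proof. intros [k Hk]; exists (-k)%Z; rewrite opp_IZR; lra. Qed.
Lemma cong_int x (k : Z) : cong (x + IZR k) x.
Proof. exists k; ring. Qed.
Lemma cong_eq x y : x = y -> cong x y.
Proof. intros ->; apply cong_refl. Qed.
Lemma cong_small x y : cong x y -> Rabs (x - y) < 1 -> x = y.
Proof.
  intros [k Hk] Ha. rewrite Hk in Ha. apply Rabs_def2 in Ha. destruct Ha as [H1 H2].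
  assert (k = 0%Z).
  { assert (-1 < k)%Z by (apply lt_IZR; simpl; lra).
    assert (k < 1)%Z by (apply lt_IZR; simpl; lra). lia. }
  subst. simpl in Hk. lra.
Qed.

Lemma S1_eq (a b : S1) : cong (proj1_sig a) (proj1_sig b) -> a = b.
Proof.
  destruct a as [a Ha], b as [b Hb]; simpl; intro H.
  assert (a = b) by (apply cong_small; [exact H | apply Rabs_def1; lra]).
  subst. f_equal. apply proof_irrelevance.
Qed.

Lemma fp_bounds x : 0 <= frac_part x < 1.
Proof. destruct (base_fp x); lra. Qed.
Definition S1of (x : R) : S1 := exist _ (frac_part x) (fp_bounds x).
Lemma S1of_cong x : cong (proj1_sig (S1of x)) x.
Proof. simpl. unfold frac_part. exists (- Int_part x)%Z. rewrite opp_IZR; ring. Qed.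

Ltac rabs := repeat match goal with
 | |- context [Rabs ?t] => let H := fresh in destruct (Rle_or_lt 0 t) as [H|H];
     [rewrite (Rabs_right t) by lra | rewrite (Rabs_left t) by lra]
 | H0 : context [Rabs ?t] |- _ => let H := fresh in destruct (Rle_or_lt 0 t) as [H|H];
     [rewrite (Rabs_right t) in H0 by lra | rewrite (Rabs_left t) in H0 by lra]
 end.

Lemma dS1_repr (a b : S1) x : cong (proj1_sig a - proj1_sig b) x -> Rabs x <= 1/2 -> dS1 a b = Rabs x.
Proof.
  destruct a as [a Ha], b as [b Hb]; unfold dS1; simpl. intros [k Hk] Hx.
  assert (Hk1 : (-1 <= k <= 1)%Z).
  { assert (-2 < k)%Z by (apply lt_IZR; simpl; rabs; lra).
    assert (k < 2)%Z by (apply lt_IZR; simpl; rabs; lra). lia. }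
  assert (k = -1 \/ k = 0 \/ k = 1)%Z as [-> | [-> | ->]] by lia; simpl in Hk;
  replace (a - b) with (x + (a - b - x)) by ring; rewrite Hk;
  unfold Rmin; destruct (Rle_dec _ _); rabs; lra.
Qed.

Lemma dS1_self a : dS1 a a = 0.
Proof. rewrite (dS1_repr a a 0). apply Rabs_R0. apply cong_eq; ring. rewrite Rabs_R0; lra. Qed.

Lemma dS1_nonneg a b : 0 <= dS1 a b.
Proof. destruct a as [a Ha], b as [b Hb]; unfold dS1; simpl. unfold Rmin; destruct (Rle_dec _ _); rabs; lra. Qed.

Lemma dC_same p q : fst p = fst q -> dC p q = Rabs (snd p - snd q).
Proof. intro H. unfold dC. rewrite H, dS1_self. rewrite <- sqrt_Rsqr_abs. f_equal. unfold Rsqr; ring. Qed.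

Lemma dC_sq p q : dC p q ^ 2 = dS1 (fst p) (fst q) ^ 2 + (snd p - snd q) ^ 2.
Proof. unfold dC. apply pow2_sqrt. apply Rplus_le_le_0_compat; apply pow2_ge_0. Qed.

Lemma dS1_le_dC p q : dS1 (fst p) (fst q) <= dC p q.
Proof. unfold dC. rewrite <- (sqrt_pow2 (dS1 _ _)) at 1 by apply dS1_nonneg. apply sqrt_le_1_alt. pose proof (pow2_ge_0 (snd p - snd q)); lra. Qed.

Definition lift (d : R) : R :=
  if Rle_dec (Rabs d) (1/2) then d else if Rlt_dec 0 d then d - 1 else d + 1.

Lemma lift_prop (a b : S1) : cong (proj1_sig a - proj1_sig b) (lift (proj1_sig a - proj1_sig b))
   /\ Rabs (lift (proj1_sig a - proj1_sig b)) = dS1 a b.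
Proof.
  destruct a as [a Ha], b as [b Hb]; unfold dS1, lift; simpl.
  destruct (Rle_dec _ _) as [H1|H1].
  - split. apply cong_refl. unfold Rmin; destruct (Rle_dec _ _); rabs; lra.
  - destruct (Rlt_dec _ _) as [H2|H2].
    + split. exists 1%Z; simpl; ring. unfold Rmin; destruct (Rle_dec _ _); rabs; lra.
    + split. exists (-1)%Z; simpl; ring. unfold Rmin; destruct (Rle_dec _ _); rabs; lra.
Qed.

Lemma lc_const_le {A : Type} (h : R -> A) :
  (forall s, exists eps, 0 < eps /\ forall t, Rabs (t - s) < eps -> h t = h s) ->
  forall a b, a <= b -> h b = h a.
Proof.
  intros Hloc a b Hab.
  set (E := fun r => a <= r <= b /\ forall t, a <= t <= r -> h t = h a).
  assert (Hb : bound E) by (exists b; intros r [Hr _]; lra).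
  assert (Ha : exists x, E x) by (exists a; split; [lra| intros t Ht; f_equal; lra]).
  destruct (completeness E Hb Ha) as [m [Hub Hlub]].
  assert (Ham : a <= m) by (apply Hub; split; [lra| intros t Ht; f_equal; lra]).
  assert (Hmb : m <= b) by (apply Hlub; intros r [Hr _]; lra).
  destruct (Hloc m) as [eps [Heps Hm]].
  destruct (classic (exists r, E r /\ m - eps < r)) as [[r [[Hr1 Hr2] Hr3]] | Hn].
  2: { exfalso. assert (m <= m - eps); [|lra]. apply Hlub. intros r Hr.
       destruct (Rle_or_lt r (m - eps)); auto. exfalso; apply Hn; eauto. }
  assert (Hrm : r <= m) by (apply Hub; split; auto).
  assert (Hhm : h m = h a).
  { rewrite <- (Hr2 r) by lra. symmetry. apply Hm. apply Rabs_def1; lra. }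
  assert (Hnew : E (Rmin (m + eps/2) b)).
  { split. unfold Rmin; destruct (Rle_dec _ _); lra.
    intros t Ht. destruct (Rle_or_lt t r). apply Hr2; lra.
    rewrite <- Hhm. apply Hm. apply Rabs_def1; unfold Rmin in Ht; destruct (Rle_dec _ _); lra. }
  apply Hub in Hnew. unfold Rmin in Hnew; destruct (Rle_dec _ _) as [Hd|Hd]; [lra|].
  assert (m = b) by lra. subst m. exact Hhm.
Qed.

Lemma lc_const {A : Type} (h : R -> A) :
  (forall s, exists eps, 0 < eps /\ forall t, Rabs (t - s) < eps -> h t = h s) ->
  forall x, h x = h 0.
Proof.
  intros Hloc x. destruct (Rle_or_lt 0 x).
  apply lc_const_le; auto. symmetry; apply lc_const_le; auto; lra.
Qed.

Definition th (p : Cyl) : R := proj1_sig (fst p).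

Definition LA (g : R -> Cyl) s eps e1 e2 :=
  0 < eps /\ e1 ^ 2 + e2 ^ 2 = 1 /\
  forall u, Rabs (u - s) < eps ->
    cong (th (g u)) (th (g s) + (u - s) * e1) /\ snd (g u) = snd (g s) + (u - s) * e2.

Lemma local_affine g : loc_isom g -> forall s, exists eps e1 e2, LA g s eps e1 e2.
Proof.
  intros Hg s. destruct (Hg s) as [e0 [He0 Hiso]].
  set (eps := Rmin e0 (1/8)).
  assert (Heps : 0 < eps) by (unfold eps, Rmin; destruct (Rle_dec _ _); lra).
  assert (Hle : eps <= e0 /\ eps <= 1/8) by (unfold eps, Rmin; destruct (Rle_dec _ _); lra).
  set (L := fun u => lift (th (g u) - th (g s))).
  assert (F1 : forall u, Rabs (u - s) < eps -> cong (th (g u) - th (g s)) (L u) /\ Rabs (L u) < 1/8).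
  { intros u Hu. destruct (lift_prop (fst (g u)) (fst (g s))) as [Hc Ha].
    split. exact Hc. unfold L, th. rewrite Ha.
    pose proof (dS1_le_dC (g u) (g s)). rewrite (Hiso u s) in H by (rewrite ?Rminus_diag, ?Rabs_R0; lra).
    lra. }
  assert (F2 : forall u w, Rabs (u - s) < eps -> Rabs (w - s) < eps ->
             (u - w) ^ 2 = (L u - L w) ^ 2 + (snd (g u) - snd (g w)) ^ 2).
  { intros u w Hu Hw. destruct (F1 u Hu) as [[k1 Hk1] Hl1]. destruct (F1 w Hw) as [[k2 Hk2] Hl2].
    pose proof (dC_sq (g u) (g w)) as Hsq. rewrite (Hiso u w) in Hsq by lra.
    rewrite pow2_abs in Hsq. rewrite Hsq.
    rewrite (dS1_repr _ _ (L u - L w)). rewrite pow2_abs. reflexivity.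
    exists (k1 - k2)%Z. rewrite minus_IZR. unfold th in *. lra.
    apply Rabs_def2 in Hl1; apply Rabs_def2 in Hl2. apply Rabs_le; lra. }
  set (h := eps / 2). set (t1 := s + h).
  assert (Ht1 : Rabs (t1 - s) < eps) by (unfold t1, h; apply Rabs_def1; lra).
  assert (Hs : Rabs (s - s) < eps) by (rewrite Rminus_diag, Rabs_R0; lra).
  set (A1 := L t1 - L s). set (A2 := snd (g t1) - snd (g s)).
  exists eps, (A1 / h), (A2 / h).
  assert (Hh : 0 < h) by (unfold h; lra).
  assert (E1 : h ^ 2 = A1 ^ 2 + A2 ^ 2) by (unfold A1, A2; rewrite <- (F2 t1 s) by auto; unfold t1; f_equal; ring).
  split; [exact Heps| split].
  { field_simplify; [|lra]. rewrite <- E1. field. lra. }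
  intros u Hu.
  set (k := u - s). set (B1 := L u - L s). set (B2 := snd (g u) - snd (g s)).
  assert (E2 : k ^ 2 = B1 ^ 2 + B2 ^ 2) by (unfold k, B1, B2; apply F2; auto).
  assert (E3 : (h - k) ^ 2 = (A1 - B1) ^ 2 + (A2 - B2) ^ 2).
  { replace (h - k) with (t1 - u) by (unfold t1, k; ring).
    replace (A1 - B1) with (L t1 - L u) by (unfold A1, B1; ring).
    replace (A2 - B2) with (snd (g t1) - snd (g u)) by (unfold A2, B2; ring). apply F2; auto. }
  assert (Dot : A1 * B1 + A2 * B2 = h * k) by nra.
  assert (Z0 : (k * A1 - h * B1)² + (k * A2 - h * B2)² = 0).
  { unfold Rsqr. replace ((k * A1 - h * B1) * (k * A1 - h * B1) + (k * A2 - h * B2) * (k * A2 - h * B2))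
      with (k^2 * (A1^2 + A2^2) + h^2 * (B1^2+B2^2) - 2 * k * h * (A1 * B1 + A2 * B2)) by ring.
    rewrite <- E1, <- E2, Dot. ring. }
  apply Rplus_sqr_eq_0 in Z0. destruct Z0 as [Z1 Z2].
  apply Rminus_diag_uniq in Z1. apply Rminus_diag_uniq in Z2.
  assert (HB1 : k * (A1 / h) = B1) by (unfold Rdiv; rewrite <- Rmult_assoc, Z1; field; lra).
  assert (HB2 : k * (A2 / h) = B2) by (unfold Rdiv; rewrite <- Rmult_assoc, Z2; field; lra).
  rewrite HB1, HB2. split.
  - destruct (F1 u Hu) as [Hc _]. destruct (F1 s Hs) as [Hc0 _].
    destruct Hc as [k1 Hk1]; destruct Hc0 as [k2 Hk2].
    exists (k1 - k2)%Z. rewrite minus_IZR. unfold B1. lra.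
  - unfold B2; ring.
Qed.

Lemma LA_overlap g s s' eps e1 e2 eps' e1' e2' :
  LA g s eps e1 e2 -> LA g s' eps' e1' e2' -> Rabs (s' - s) < eps -> e1 = e1' /\ e2 = e2'.
Proof.
  intros [He [Hn H]] [He' [Hn' H']] Hs.
  set (h := Rmin (Rmin eps' (eps - Rabs (s' - s))) (1/4) / 2).
  assert (Hh : 0 < h /\ h < eps' /\ h < eps - Rabs (s' - s) /\ h <= 1/8).
  { unfold h, Rmin; repeat destruct (Rle_dec _ _); lra. }
  set (u := s' + h).
  assert (Hu' : Rabs (u - s') < eps') by (unfold u; replace (s' + h - s') with h by ring; rewrite Rabs_right; lra).
  assert (Hu : Rabs (u - s) < eps).
  { unfold u. replace (s' + h - s) with ((s' - s) + h) by ring.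
    pose proof (Rabs_triang (s' - s) h). rewrite (Rabs_right h) in H0 by lra. lra. }
  destruct (H u Hu) as [C1 Z1]. destruct (H s' Hs) as [C2 Z2]. destruct (H' u Hu') as [C3 Z3].
  assert (He2 : e2 = e2').
  { assert (h * e2 = h * e2') by (unfold u in *; nra). apply Rmult_eq_reg_l in H0; lra. }
  split; [|exact He2].
  assert (Hc : cong (h * e1) (h * e1')).
  { destruct C1 as [k1 K1]; destruct C2 as [k2 K2]; destruct C3 as [k3 K3].
    exists (k2 + k3 - k1)%Z. rewrite minus_IZR, plus_IZR. unfold u in *.
    replace (s' + h - s') with h in K3 by ring. lra. }
  apply cong_small in Hc.
  - apply Rmult_eq_reg_l in Hc; lra.
  - assert (Rabs e1 <= 1 /\ Rabs e1' <= 1) as [A B].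
    { split; apply Rabs_le; nra. }
    replace (h * e1 - h * e1') with (h * (e1 - e1')) by ring.
    rewrite Rabs_mult, Rabs_right by lra.
    pose proof (Rabs_triang e1 (- e1')). rewrite Rabs_Ropp in H0.
    unfold Rminus. nra.
Qed.

Lemma geod_affine g : loc_isom g -> exists a0 c0 al be, al ^ 2 + be ^ 2 = 1 /\
  forall t, cong (th (g t)) (a0 + al * t) /\ snd (g t) = c0 + be * t.
Proof.
  intro Hg.
  destruct (functional_choice (fun s (w : R * R * R) => LA g s (fst (fst w)) (snd (fst w)) (snd w)))
    as [W HW].
  { intro s. destruct (local_affine g Hg s) as [eps [e1 [e2 H]]]. exists (eps, e1, e2). exact H. }
  assert (Hloc : forall s, exists eps, 0 < eps /\ forall t, Rabs (t - s) < eps -> (snd (fst (W t)), snd (W t)) = (snd (fst (W s)), snd (W s))).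
  { intro s. exists (fst (fst (W s))). split. apply (HW s).
    intros t Ht. destruct (LA_overlap g s t _ _ _ _ _ _ (HW s) (HW t)) as [E1 E2]; auto. rewrite E1, E2; reflexivity. }
  pose proof (lc_const _ Hloc) as Hc.
  set (al := snd (fst (W 0))). set (be := snd (W 0)).
  assert (HE : forall t, snd (fst (W t)) = al /\ snd (W t) = be).
  { intro t. specialize (Hc t). inversion Hc. auto. }
  assert (Hz : forall s, exists eps, 0 < eps /\ forall t, Rabs (t - s) < eps -> snd (g t) - be * t = snd (g s) - be * s).
  { intro s. destruct (HW s) as [He [_ H]]. exists (fst (fst (W s))). split; auto.
    intros t Ht. destruct (H t Ht) as [_ ->]. destruct (HE s) as [_ ->]. ring. }
  assert (Hth : forall s, exists eps, 0 < eps /\ forall t, Rabs (t - s) < eps -> S1of (th (g t) - al * t) = S1of (th (g s) - al * s)).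
  { intro s. destruct (HW s) as [He [_ H]]. exists (fst (fst (W s))). split; auto.
    intros t Ht. destruct (H t Ht) as [C _]. rewrite (proj1 (HE s)) in C.
    apply S1_eq. eapply cong_trans. apply S1of_cong. eapply cong_trans. 2: apply cong_sym, S1of_cong.
    destruct C as [k Hk]. exists k. rewrite <- Hk. ring. }
  pose proof (lc_const _ Hz) as Hz'. pose proof (lc_const _ Hth) as Hth'.
  exists (proj1_sig (S1of (th (g 0) - al * 0))), (snd (g 0) - be * 0), al, be.
  split.
  { destruct (HW 0) as [_ [Hn _]]. destruct (HE 0) as [A B]. rewrite A, B in Hn. exact Hn. }
  intro t. split.
  - rewrite <- (Hth' t). pose proof (S1of_cong (th (g t) - al * t)) as C.
    destruct C as [k Hk]. exists (-k)%Z. rewrite opp_IZR. lra.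
  - rewrite <- (Hz' t). ring.
Qed.

Definition ell (a c q : R) : Cyl -> Prop :=
  fun p => exists s, cong (th p) (a + s) /\ snd p = c + q * s.

Lemma pair_eq (p q : Cyl) : fst p = fst q -> snd p = snd q -> p = q.
Proof. destruct p, q; simpl; intros -> ->; reflexivity. Qed.

Lemma classify G : is_geodesic G ->
  (exists t0, forall p, G p <-> fst p = t0) \/ (exists a c q, forall p, G p <-> ell a c q p).
Proof.
  intros [g [Hg HG]]. destruct (geod_affine g Hg) as [a0 [c0 [al [be [Hn H]]]]].
  destruct (Req_dec al 0) as [Ha|Ha].
  - left. exists (fst (g 0)). intro p. rewrite HG. split.
    + intros [s <-]. apply S1_eq. destruct (H s) as [C1 _]. destruct (H 0) as [C2 _].
      subst al. eapply cong_trans. exact C1. apply cong_sym. rewrite !Rmult_0_l in *. exact C2.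
    + intro Hp. subst al. assert (Hb : be <> 0) by (intro; subst; simpl in Hn; lra).
      exists ((snd p - c0) / be). apply pair_eq.
      * rewrite Hp. apply S1_eq. destruct (H ((snd p - c0) / be)) as [C1 _]. destruct (H 0) as [C2 _].
        rewrite !Rmult_0_l in *. eapply cong_trans. exact C1. apply cong_sym. exact C2.
      * destruct (H ((snd p - c0) / be)) as [_ ->]. field. auto.
  - right. exists a0, c0, (be / al). intro p. rewrite HG. split.
    + intros [t <-]. exists (al * t). destruct (H t) as [C ->]. split. exact C. field. auto.
    + intros [s [C E]]. exists (s / al). apply pair_eq.
      * apply S1_eq. destruct (H (s / al)) as [C1 _]. eapply cong_trans. exact C1.
        replace (al * (s / al)) with s by (field; auto). apply cong_sym. exact C.
      * destruct (H (s / al)) as [_ ->]. rewrite E. field. auto.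
Qed.

Lemma vert_geod t0 : is_geodesic (vertical t0).
Proof.
  exists (fun t => (t0, t)). split.
  - intro s. exists 1. split. lra. intros t u _ _. rewrite dC_same by reflexivity. reflexivity.
  - intro p. unfold vertical. split.
    + intro H. exists (snd p). apply pair_eq; simpl; auto.
    + intros [s <-]. reflexivity.
Qed.

Lemma line_geod a c q : is_geodesic (ell a c q).
Proof.
  set (al := / sqrt (1 + q ^ 2)).
  assert (Hs : 1 <= sqrt (1 + q ^ 2)).
  { rewrite <- sqrt_1 at 1. apply sqrt_le_1_alt. pose proof (pow2_ge_0 q). lra. }
  assert (Hal : 0 < al /\ al <= 1).
  { unfold al. split. apply Rinv_0_lt_compat; lra.
    assert (/ sqrt (1 + q ^ 2) <= / 1) by (apply Rinv_le_contravar; lra). rewrite Rinv_1 in H; exact H. }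
  assert (Hal2 : al ^ 2 * (1 + q ^ 2) = 1).
  { unfold al. rewrite pow_inv. rewrite pow2_sqrt by (pose proof (pow2_ge_0 q); lra).
    field. pose proof (pow2_ge_0 q); lra. }
  exists (fun t => (S1of (a + al * t), c + q * al * t)). split.
  - intro s. exists (1/4). split. lra. intros t u Ht Hu.
    unfold dC. cbn [fst snd].
    rewrite (dS1_repr _ _ (al * (t - u))).
    + rewrite pow2_abs. rewrite <- (sqrt_pow2 (Rabs (t - u))) by apply Rabs_pos.
      rewrite pow2_abs. f_equal.
      replace ((t - u) ^ 2) with (al ^ 2 * (1 + q ^ 2) * (t - u) ^ 2) by (rewrite Hal2; ring). ring.
    + destruct (S1of_cong (a + al * t)) as [k1 K1]. destruct (S1of_cong (a + al * u)) as [k2 K2].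
      exists (k1 - k2)%Z. rewrite minus_IZR. lra.
    + rewrite Rabs_mult, (Rabs_right al) by lra.
      assert (Rabs (t - u) < 1/2).
      { apply Rabs_def2 in Ht; apply Rabs_def2 in Hu. apply Rabs_def1; lra. }
      pose proof (Rabs_pos (t - u)). nra.
  - intro p. split.
    + intros [s [C E]]. exists (s / al). apply pair_eq; simpl.
      * apply S1_eq. eapply cong_trans. apply S1of_cong.
        replace (al * (s / al)) with s by (field; lra). apply cong_sym. exact C.
      * rewrite E. field. lra.
    + intros [t <-]. exists (al * t). split. apply S1of_cong. simpl. ring.
Qed.

Lemma not_cong_half : ~ cong 0 (1/2).
Proof. intros [k Hk]. assert (-1 < k)%Z by (apply lt_IZR; simpl; lra).
  assert (k < 0)%Z by (apply lt_IZR; simpl; lra). lia. Qed.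


Definition HYP (f : Cyl -> Cyl) (th0 : S1) :=
  bijective_map f /\ geodesic_preserving f /\ (forall p, img f (vertical th0) p <-> vertical th0 p).

Lemma vert_img f th0 : HYP f th0 -> forall t, exists t', forall p, img f (vertical t) p <-> fst p = t'.
Proof.
  intros [[Hinj Hsur] [Hg Hv]] t.
  destruct (classic (t = th0)) as [->|Hne].
  { exists th0. exact Hv. }
  destruct (classify _ (Hg _ (vert_geod t))) as [H|[a [c [q Hl]]]]; [exact H|].
  exfalso. set (p0 := (th0, c + q * (proj1_sig th0 - a)) : Cyl).
  assert (H1 : img f (vertical t) p0).
  { apply Hl. exists (proj1_sig th0 - a). split. apply cong_eq. unfold th, p0; simpl; ring. reflexivity. }
  assert (H2 : img f (vertical th0) p0) by (apply Hv; reflexivity).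
  destruct H1 as [q1 [E1 F1]]. destruct H2 as [q2 [E2 F2]].
  rewrite <- F2 in F1. apply Hinj in F1. subst. apply Hne. rewrite <- E1. exact E2.
Qed.

Lemma fst_f f th0 : HYP f th0 -> forall x y, fst x = fst y -> fst (f x) = fst (f y).
Proof.
  intros HH x y E. destruct (vert_img f th0 HH (fst x)) as [t' Ht].
  assert (A : fst (f x) = t') by (apply Ht; exists x; split; reflexivity).
  assert (B : fst (f y) = t') by (apply Ht; exists y; split; [symmetry; exact E| reflexivity]).
  congruence.
Qed.

Lemma fst_f_inv f th0 : HYP f th0 -> forall x y, fst (f x) = fst (f y) -> fst x = fst y.
Proof.
  intros HH x y E. pose proof HH as [[Hinj _] _]. destruct (vert_img f th0 HH (fst x)) as [t' Ht].
  assert (A : fst (f x) = t') by (apply Ht; exists x; split; reflexivity).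
  assert (B : img f (vertical (fst x)) (f y)) by (apply Ht; congruence).
  destruct B as [z [Hz Fz]]. apply Hinj in Fz. subst. symmetry. exact Hz.
Qed.

Lemma f_v f th0 : HYP f th0 -> forall b, fst (f (th0, b)) = th0.
Proof. intros [_ [_ Hv]] b. apply Hv. exists (th0, b). split; reflexivity. Qed.

Definition phi (f : Cyl -> Cyl) (th0 : S1) (b : R) : R := snd (f (th0, b)).

Lemma height f th0 : HYP f th0 -> forall t b, snd (f (t, b)) = phi f th0 b.
Proof.
  intros HH t b. pose proof HH as [[Hinj Hsur] [Hg Hv]].
  assert (Hb : forall p, ell 0 b 0 p <-> snd p = b).
  { intro p. split. intros [s [_ E]]. rewrite E; ring.
    intro E. exists (th p). split. apply cong_eq; ring. rewrite E; ring. }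
  destruct (classify _ (Hg _ (line_geod 0 b 0))) as [[t' Ht]|[a [c [q Hl]]]].
  - exfalso.
    assert (A : fst (f (th0, b)) = t') by (apply Ht; exists (th0, b); split; [apply Hb; reflexivity| reflexivity]).
    rewrite (f_v f th0 HH) in A.
    assert (B : img f (ell 0 b 0) (f (th0, b + 1))) by (apply Ht; rewrite (f_v f th0 HH); exact A).
    destruct B as [Y [HY FY]]. apply Hinj in FY. subst Y. apply Hb in HY. simpl in HY. lra.
  - destruct (Req_dec q 0) as [->|Hq].
    + assert (A : ell a c 0 (f (th0, b))) by (apply Hl; exists (th0, b); split; [apply Hb; reflexivity| reflexivity]).
      assert (B : ell a c 0 (f (t, b))) by (apply Hl; exists (t, b); split; [apply Hb; reflexivity| reflexivity]).
      destruct A as [s1 [_ E1]]. destruct B as [s2 [_ E2]]. unfold phi. rewrite E1, E2. ring.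
    + exfalso. set (s0 := proj1_sig th0 - a).
      set (p1 := (th0, c + q * s0) : Cyl). set (p2 := (th0, c + q * (s0 + 1)) : Cyl).
      assert (K : forall p, ell a c q p -> fst p = th0 -> p = f (th0, b)).
      { intros p Hp Ep. apply Hl in Hp. destruct Hp as [Y [HY FY]].
        assert (Hp2 : img f (vertical th0) p) by (apply Hv; exact Ep).
        destruct Hp2 as [Z [HZ FZ]]. rewrite <- FZ in FY. apply Hinj in FY. subst Y.
        rewrite <- FZ. f_equal. apply pair_eq. exact HZ. apply Hb. exact HY. }
      assert (E1 : p1 = f (th0, b)).
      { apply K; [|reflexivity]. exists s0. split; [apply cong_eq; unfold th, p1, s0; simpl; ring| reflexivity]. }
      assert (E2 : p2 = f (th0, b)).
      { apply K; [|reflexivity]. exists (s0 + 1). split; [|reflexivity].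
        exists (-1)%Z. unfold th, p2, s0; simpl; ring. }
      rewrite <- E2 in E1. unfold p1, p2 in E1. injection E1. intro. apply Hq. nra.
Qed.

Lemma phi_inj f th0 : HYP f th0 -> forall b b', phi f th0 b = phi f th0 b' -> b = b'.
Proof.
  intros HH b b' E. pose proof HH as [[Hinj _] _].
  assert (f (th0, b) = f (th0, b')) by (apply pair_eq; [rewrite !(f_v f th0 HH); reflexivity| exact E]).
  apply Hinj in H. injection H; auto.
Qed.

Definition APm (phi : R -> R) m q := q <> 0 /\
  (forall x (k : Z), exists j : Z, phi (x + IZR k * m) = phi x + IZR j * q) /\
  (forall x (j : Z), exists k : Z, phi (x + IZR k * m) = phi x + IZR j * q).

Lemma helixAP f th0 : HYP f th0 -> f (th0, 0) = (th0, 0) -> forall m, m <> 0 -> exists q, APm (phi f th0) m q.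
Proof.
  intros HH H0 m Hm. pose proof HH as [[Hinj Hsur] [Hg Hv]].
  set (Hm_ := ell (proj1_sig th0) 0 m).
  assert (Mem : forall x k y, y = x + IZR k * m -> Hm_ (S1of (proj1_sig th0 + x / m), y)).
  { intros x k y ->. exists (x / m + IZR k). split.
    - destruct (S1of_cong (proj1_sig th0 + x / m)) as [k0 K0]. exists (k0 - k)%Z. rewrite minus_IZR.
      unfold th; simpl. unfold th in K0. simpl in K0. lra.
    - cbn [snd]. field. auto. }
  destruct (classify _ (Hg _ (line_geod (proj1_sig th0) 0 m))) as [[t' Ht]|[a [c [q Hl]]]].
  - exfalso.
    assert (A : fst (f (th0, 0)) = t').
    { apply Ht. exists (th0, 0). split; [|reflexivity]. exists 0. split. apply cong_eq; unfold th; simpl; ring. simpl; ring. }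
    rewrite (f_v f th0 HH) in A.
    assert (B : img f Hm_ (f (th0, m / 2))) by (apply Ht; rewrite (f_v f th0 HH); exact A).
    destruct B as [Y [HY FY]]. apply Hinj in FY. subst Y.
    destruct HY as [s [C E]]. simpl in E. assert (s = 1/2) by (apply (Rmult_eq_reg_l m); [lra| auto]).
    subst s. apply not_cong_half. destruct C as [k Hk]. exists k. unfold th in Hk; simpl in Hk. lra.
  - exists q.
    assert (Hf0 : forall x k, ell a c q (f (S1of (proj1_sig th0 + x / m), x + IZR k * m))).
    { intros x k. apply Hl. eexists; split; [apply (Mem x k); reflexivity| reflexivity]. }
    assert (Hx0 : forall x, x = x + IZR 0 * m) by (intro; simpl; ring).
    split; [|split].
    + intro Hq. subst q.
      assert (A : ell a c 0 (f (th0, 0))).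
      { apply Hl. exists (th0, 0). split; [|reflexivity]. exists 0. split. apply cong_eq; unfold th; simpl; ring. simpl; ring. }
      assert (B : ell a c 0 (f (th0, m))).
      { apply Hl. exists (th0, m). split; [|reflexivity]. exists 1. split. exists (-1)%Z. unfold th; simpl; ring. simpl; ring. }
      rewrite H0 in A. destruct A as [s1 [_ E1]]. destruct B as [s2 [_ E2]]. simpl in E1.
      apply Hm. apply (phi_inj f th0 HH). unfold phi. rewrite E2, H0. simpl. lra.
    + intros x k. destruct (Hf0 x 0%Z) as [s1 [C1 E1]]. destruct (Hf0 x k) as [s2 [C2 E2]].
      rewrite (height f th0 HH) in E1, E2. rewrite <- Hx0 in E1.
      assert (Ef : th (f (S1of (proj1_sig th0 + x / m), x + IZR 0 * m)) = th (f (S1of (proj1_sig th0 + x / m), x + IZR k * m))).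
      { unfold th. f_equal. apply (fst_f f th0 HH). reflexivity. }
      rewrite Ef in C1. destruct C1 as [k1 K1]. destruct C2 as [k2 K2].
      exists (k1 - k2)%Z. rewrite minus_IZR. rewrite E1, E2. replace s2 with (s1 + (IZR k1 - IZR k2)) by lra. ring.
    + intros x j. destruct (Hf0 x 0%Z) as [s1 [C1 E1]].
      set (P0 := (S1of (proj1_sig th0 + x / m), x + IZR 0 * m)) in *.
      set (R0 := (fst (f P0), c + q * (s1 + IZR j)) : Cyl).
      assert (HR : img f Hm_ R0).
      { apply Hl. exists (s1 + IZR j). split; [|reflexivity].
        destruct C1 as [k1 K1]. exists (k1 - j)%Z. rewrite minus_IZR. unfold th, R0 in *; simpl. lra. }
      destruct HR as [Y [HY FY]].
      assert (FstY : fst Y = fst P0) by (apply (fst_f_inv f th0 HH); rewrite FY; reflexivity).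
      destruct HY as [sY [CY EY]]. simpl in EY.
      assert (CC : cong (proj1_sig th0 + x / m) (proj1_sig th0 + sY)).
      { eapply cong_trans. apply cong_sym. apply S1of_cong. unfold th in CY. rewrite FstY in CY. exact CY. }
      destruct CC as [K HK].
      exists (- K)%Z. rewrite opp_IZR.
      replace (x + - IZR K * m) with (snd Y).
      2: { rewrite EY. replace sY with (x / m - IZR K) by lra. field. auto. }
      rewrite <- (height f th0 HH (fst Y)). rewrite <- surjective_pairing. rewrite FY.
      unfold R0; cbn [snd]. unfold P0 in E1. rewrite (height f th0 HH) in E1. rewrite <- Hx0 in E1. rewrite E1. ring.
Qed.

Lemma php (A B : nat) (g : nat -> nat) :
  (forall i, (i < A)%nat -> (g i < B)%nat) ->
  (forall i j, (i < A)%nat -> (j < A)%nat -> g i = g j -> i = j) -> (A <= B)%nat.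
Proof.
  revert B g. induction A as [|A IH]; intros B g Hr Hi. lia.
  destruct B as [|B]. { specialize (Hr 0%nat ltac:(lia)). lia. }
  set (b := g A).
  set (g' := fun i => if Nat.ltb (g i) b then g i else (g i - 1)%nat).
  assert (Hne : forall i, (i < A)%nat -> g i <> b).
  { intros i Hi' E. assert (i = A) by (apply Hi; [lia|lia|exact E]). lia. }
  assert (Hb : (b < S B)%nat) by (apply Hr; lia).
  enough (A <= B)%nat by lia.
  apply (IH B g').
  - intros i Hi'. unfold g'. pose proof (Hr i ltac:(lia)). pose proof (Hne i Hi').
    destruct (Nat.ltb_spec (g i) b); lia.
  - intros i j Hi' Hj' E. unfold g' in E. pose proof (Hne i Hi'). pose proof (Hne j Hj').
    apply Hi; try lia.
    destruct (Nat.ltb_spec (g i) b); destruct (Nat.ltb_spec (g j) b); lia.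
Qed.

Lemma IZR_cancel (a b : Z) Q : Q <> 0 -> IZR a * Q = IZR b * Q -> a = b.
Proof. intros HQ E. apply eq_IZR. apply Rmult_eq_reg_r with Q; auto. Qed.


Lemma count (phi : R -> R) Q QN (N : Z) :
  (forall a b, phi a = phi b -> a = b) ->
  APm phi 1 Q -> (1 <= N)%Z -> APm phi (IZR N) QN ->
  exists r : Z, QN = IZR r * Q /\ Z.abs r = N.
Proof.
  intros Hinj [HQ [A2 A3]] HN [HQN [B2 B3]].
  assert (A2' : forall k : Z, exists j : Z, phi (IZR k) = phi 0 + IZR j * Q).
  { intro k. destruct (A2 0 k) as [j Hj]. exists j. rewrite <- Hj. f_equal. ring. }
  assert (A3' : forall j : Z, exists k : Z, phi (IZR k) = phi 0 + IZR j * Q).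
  { intro j. destruct (A3 0 j) as [k Hk]. exists k. rewrite <- Hk. f_equal. ring. }
  assert (B2' : forall a k : Z, exists j : Z, phi (IZR (a + k * N)) = phi (IZR a) + IZR j * QN).
  { intros a k. destruct (B2 (IZR a) k) as [j Hj]. exists j. rewrite <- Hj. f_equal. rewrite plus_IZR, mult_IZR. ring. }
  assert (B3' : forall a j : Z, exists k : Z, phi (IZR (a + k * N)) = phi (IZR a) + IZR j * QN).
  { intros a j. destruct (B3 (IZR a) j) as [k Hk]. exists k. rewrite <- Hk. f_equal. rewrite plus_IZR, mult_IZR. ring. }
  assert (Zinj : forall a b : Z, phi (IZR a) = phi (IZR b) -> a = b).
  { intros a b E. apply eq_IZR. apply Hinj. exact E. }
  destruct (B3' 0%Z 1%Z) as [k Hk]. destruct (A2' (0 + k * N)%Z) as [r Hr].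
  rewrite Hk in Hr. simpl in Hr. replace (phi (IZR 0)) with (phi 0) in Hr by reflexivity.
  assert (HQNr : QN = IZR r * Q) by lra.
  exists r. split; [exact HQNr|].
  assert (Hr0 : r <> 0%Z) by (intro E0; rewrite E0 in HQNr; simpl in HQNr; apply HQN; lra).
  apply Z.le_antisymm.
  -
    destruct (functional_choice (fun (i : nat) (k : Z) => phi (IZR k) = phi 0 + IZR (Z.of_nat i) * Q)) as [K HK].
    { intro i. apply A3'. }
    assert (Hle : (Z.to_nat (Z.abs r) <= Z.to_nat N)%nat).
    { apply (php _ _ (fun i => Z.to_nat (K i mod N))).
      - intros i _. pose proof (Z.mod_pos_bound (K i) N ltac:(lia)). lia.
      - intros i j Hi Hj E.
        pose proof (Z.mod_pos_bound (K i) N ltac:(lia)). pose proof (Z.mod_pos_bound (K j) N ltac:(lia)).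
        assert (Em : (K i mod N = K j mod N)%Z) by lia.
        assert (Ek : K i = (K j + (K i / N - K j / N) * N)%Z).
        { pose proof (Z.div_mod (K i) N ltac:(lia)). pose proof (Z.div_mod (K j) N ltac:(lia)). lia. }
        destruct (B2' (K j) (K i / N - K j / N)%Z) as [u Hu].
        rewrite <- Ek in Hu. rewrite HK, HK, HQNr in Hu.
        assert (Eq : (Z.of_nat i - Z.of_nat j = u * r)%Z).
        { apply (IZR_cancel _ _ Q HQ). rewrite minus_IZR, !mult_IZR. lra. }
        assert (u = 0%Z) by nia. subst u. lia. }
    lia.
  -
    destruct (functional_choice (fun (i : nat) (c : Z) => phi (IZR (Z.of_nat i)) = phi 0 + IZR c * Q)) as [C HC].
    { intro i. apply A2'. }
    assert (Hle : (Z.to_nat N <= Z.to_nat (Z.abs r))%nat).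
    { apply (php _ _ (fun i => Z.to_nat (C i mod Z.abs r))).
      - intros i _. pose proof (Z.mod_pos_bound (C i) (Z.abs r) ltac:(lia)). lia.
      - intros i j Hi Hj E.
        pose proof (Z.mod_pos_bound (C i) (Z.abs r) ltac:(lia)). pose proof (Z.mod_pos_bound (C j) (Z.abs r) ltac:(lia)).
        assert (Em : (C i mod Z.abs r = C j mod Z.abs r)%Z) by lia.
        set (t := (C i / Z.abs r - C j / Z.abs r)%Z).
        assert (Ec : C i = (C j + t * Z.abs r)%Z).
        { pose proof (Z.div_mod (C i) (Z.abs r) ltac:(lia)). pose proof (Z.div_mod (C j) (Z.abs r) ltac:(lia)). unfold t. lia. }
        destruct (B3' (Z.of_nat j) (t * Z.sgn r)%Z) as [kk Hkk].
        assert (E2 : phi (IZR (Z.of_nat j + kk * N)) = phi (IZR (Z.of_nat i))).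
        { rewrite Hkk, HC, HC, HQNr, Ec. rewrite <- (Z.sgn_abs r). rewrite !plus_IZR, !mult_IZR. ring. }
        apply Zinj in E2.
        assert (kk = 0%Z) by nia. subst kk. lia. }
    lia.
Qed.

Lemma step (phi : R -> R) Q :
  (forall a b, phi a = phi b -> a = b) ->
  APm phi 1 Q ->
  (forall m, m <> 0 -> exists q, APm phi m q) ->
  forall x, phi (x + 1) = phi x + Q \/ phi (x + 1) = phi x - Q.
Proof.
  intros Hinj HA Hall x.
  pose proof HA as [HQ [A2 A3]].
  destruct (A2 x 1%Z) as [j Hj]. replace (x + IZR 1 * 1) with (x + 1) in Hj by (simpl; ring).
  assert (Hj0 : j <> 0%Z).
  { intro; subst. simpl in Hj. assert (x + 1 = x) by (apply Hinj; lra). lra. }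
  set (N := Z.abs j).
  assert (HN : (1 <= N)%Z) by (unfold N; lia).
  destruct (Hall (IZR N)) as [QN HQN]. { apply not_0_IZR. lia. }
  destruct (count phi Q QN N Hinj HA HN HQN) as [r [Hr Hrn]].
  destruct HQN as [_ [_ B3]].
  assert (He : exists e : Z, (e = 1 \/ e = -1)%Z /\ j = (e * r)%Z).
  { unfold N in Hrn. destruct (Z.abs_spec r) as [[? Hr1]|[? Hr1]]; destruct (Z.abs_spec j) as [[? Hj1]|[? Hj1]].
    - exists 1%Z. lia.
    - exists (-1)%Z. lia.
    - exists (-1)%Z. lia.
    - exists 1%Z. lia. }
  destruct He as [e [He Hje]].
  destruct (B3 x e) as [k Hk].
  rewrite Hr in Hk.
  assert (E : phi (x + IZR k * IZR N) = phi (x + 1)).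
  { rewrite Hk, Hj, Hje, mult_IZR. ring. }
  apply Hinj in E. rewrite <- mult_IZR in E.
  assert (Ek : (k * N = 1)%Z) by (apply eq_IZR; lra).
  assert (N = 1)%Z by (clearbody N; destruct (Z.lt_trichotomy k 0) as [?|[?|?]]; nia).
  assert (j = 1 \/ j = -1)%Z as [-> | ->] by (unfold N in *; lia).
  - left. rewrite Hj. simpl. ring.
  - right. rewrite Hj. simpl. ring.
Qed.

Theorem lemma4p5 (f : Cyl -> Cyl) (th0 : S1) :
  bijective_map f ->
  geodesic_preserving f ->
  (forall p, img f (vertical th0) p <-> vertical th0 p) ->
  f (th0, 0) = (th0, 0) ->
  f (th0, 1) = (th0, 1) ->
  forall x y : Cyl, fst x = fst y -> dC x y = 1 -> dC (f x) (f y) = 1.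
Proof.
  intros Hb Hg Hv H0 H1 x y Exy Dxy.
  assert (HH : HYP f th0) by (split; [exact Hb| split; assumption]).
  set (ph := phi f th0).
  assert (Hinj : forall a b, ph a = ph b -> a = b) by (apply phi_inj; exact HH).
  assert (Hall : forall m, m <> 0 -> exists q, APm ph m q) by (apply helixAP; assumption).
  destruct (Hall 1 ltac:(lra)) as [Q HQ].
  pose proof (step ph Q Hinj HQ Hall) as St.
  assert (P0 : ph 0 = 0) by (unfold ph, phi; rewrite H0; reflexivity).
  assert (P1 : ph 1 = 1) by (unfold ph, phi; rewrite H1; reflexivity).
  assert (HQ1 : Rabs Q = 1).
  { destruct (St 0) as [E|E]; rewrite Rplus_0_l, P1, P0 in E.
    rewrite Rabs_right; lra. rewrite Rabs_left; lra. }
  assert (Hs : forall a, Rabs (ph (a + 1) - ph a) = 1).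
  { intro a. destruct (St a) as [E|E]; rewrite E.
    replace (ph a + Q - ph a) with Q by ring. exact HQ1.
    replace (ph a - Q - ph a) with (- Q) by ring. rewrite Rabs_Ropp. exact HQ1. }
  rewrite dC_same in Dxy by exact Exy.
  rewrite dC_same by (apply (fst_f f th0 HH); exact Exy).
  rewrite (surjective_pairing x), (surjective_pairing y).
  rewrite !(height f th0 HH). fold ph.
  destruct (Rle_or_lt 0 (snd x - snd y)) as [Hp|Hp].
  - rewrite Rabs_right in Dxy by lra. replace (snd x) with (snd y + 1) by lra. apply Hs.
  - rewrite Rabs_left in Dxy by lra. replace (snd y) with (snd x + 1) by lra.
    rewrite <- Rabs_Ropp. replace (- (ph (snd x) - ph (snd x + 1))) with (ph (snd x + 1) - ph (snd x)) by ring. apply Hs.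
Qed.
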